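(* Let $f:[0,1]\to\mathbb{R}$ be $1$-Lipschitz and let $\epsilon>0$. Then there exists an even polynomial $p(z)=\sum_{k=0}^{n/2}p_{2k}z^{2k}$ of degree $n=2\lceil4\epsilon^{-3}\rceil$ such that $\sup_{z\in[0,1]}|p(z)-f(z)|\le\epsilon$ and $|p_{2k}|\le 2^n$ for all $k=1,\dots,n/2$. *)

(* Defs.v *)
From Stdlib Require Import Reals Lra Lia.
Open Scope R_scope.

Definition lipschitz1_on01 (f : R -> R) : Prop :=
  forall x y, 0 <= x <= 1 -> 0 <= y <= 1 -> Rabs (f x - f y) <= Rabs (x - y).

Definition is_ceil (x : R) (N : nat) : Prop := INR N - 1 < x <= INR N.

Definition even_poly_eval (c : nat -> R) (N : nat) (z : R) : R :=
  sum_f_R0 (fun k => c k * z ^ (2 * k)) N.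

(* Main.v *)
Require Import Defs.
From Stdlib Require Import Reals Lra Lia.
Open Scope R_scope.

Fixpoint binom (n k : nat) : nat :=
  match n, k with
  | _, O => 1%nat
  | O, S _ => 0%nat
  | S n', S k' => (binom n' k' + binom n' (S k'))%nat
  end.

Lemma binom_gt n k : (n < k)%nat -> binom n k = 0%nat.
Proof.
  revert k; induction n; intros [|k] H; simpl; try lia.
  rewrite !IHn; lia.
Qed.

Lemma binom_n0 n : binom n 0 = 1%nat.
Proof. destruct n; reflexivity. Qed.

Definition bern N t k := INR (binom N k) * t ^ k * (1 - t) ^ (N - k).
Definition M N t (phi : nat -> R) := sum_f_R0 (fun k => bern N t k * phi k) N.

Lemma sum_scal a f n : sum_f_R0 (fun i => a * f i) n = a * sum_f_R0 f n.
Proof. induction n; simpl; [ring | rewrite IHn; ring]. Qed.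

Lemma M_ext N t phi psi : (forall k, (k <= N)%nat -> phi k = psi k) -> M N t phi = M N t psi.
Proof. intros H; unfold M; apply sum_eq; intros; rewrite H; auto. Qed.

Lemma M_upper N t phi L : (N <= L)%nat ->
  sum_f_R0 (fun k => bern N t k * phi k) L = M N t phi.
Proof.
  induction L; intros H.
  - assert (N = 0%nat) by lia; subst; reflexivity.
  - destruct (Nat.eq_dec N (S L)) as [->|Hn]; [reflexivity|].
    simpl. rewrite IHL by lia. unfold bern. rewrite binom_gt by lia. simpl. ring.
Qed.

Lemma bern_S N t k : bern (S N) t (S k) = t * bern N t k + (1 - t) * bern N t (S k).
Proof.
  unfold bern. simpl binom. rewrite plus_INR.
  destruct (Nat.le_gt_cases (S k) N).
  - replace (S N - S k)%nat with (N - k)%nat by lia.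
    replace (N - k)%nat with (S (N - S k)) by lia. simpl. ring.
  - rewrite (binom_gt N (S k)) by lia. simpl. ring.
Qed.

Lemma M_rec N t phi : M (S N) t phi = (1 - t) * M N t phi + t * M N t (fun k => phi (S k)).
Proof.
  unfold M at 1. rewrite decomp_sum by lia. simpl Nat.pred.
  rewrite (sum_eq _ (fun k => t * (bern N t k * phi (S k)) + (1 - t) * (bern N t (S k) * phi (S k))))
    by (intros; rewrite bern_S; ring).
  rewrite plus_sum, !sum_scal.
  rewrite <- (M_upper N t phi (S N)) by lia.
  rewrite (decomp_sum _ (S N)) by lia. simpl Nat.pred.
  assert (B0 : bern (S N) t 0 = (1 - t) * bern N t 0) by (unfold bern; rewrite !Nat.sub_0_r, !binom_n0; simpl; ring).
  rewrite B0. unfold M. ring.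
Qed.

Lemma moment N t a b c :
  M N t (fun k => a + b * INR k + c * INR k ^ 2) =
  a + b * INR N * t + c * (INR N * t + INR N * (INR N - 1) * t ^ 2).
Proof.
  revert a b c; induction N; intros a b c.
  - unfold M, bern. simpl. ring.
  - rewrite M_rec, IHN.
    rewrite (M_ext N t _ (fun k => (a + b + c) + (b + 2 * c) * INR k + c * INR k ^ 2))
      by (intros; rewrite S_INR; ring).
    rewrite IHN, S_INR. ring.
Qed.

Lemma M_one N t : M N t (fun _ => 1) = 1.
Proof.
  rewrite (M_ext N t _ (fun k => 1 + 0 * INR k + 0 * INR k ^ 2)) by (intros; ring).
  rewrite moment; ring.
Qed.

Lemma M_var N t : (0 < N)%nat ->
  M N t (fun k => (INR k / INR N - t) ^ 2) = t * (1 - t) / INR N.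
Proof.
  intros HN. assert (INR N > 0) by (apply lt_0_INR; lia).
  rewrite (M_ext N t _ (fun k => t ^ 2 + (- 2 * t / INR N) * INR k + (1 / INR N ^ 2) * INR k ^ 2))
    by (intros; field; lra).
  rewrite moment. field; lra.
Qed.

Lemma M_lin N t al be phi psi :
  M N t (fun k => al * phi k + be * psi k) = al * M N t phi + be * M N t psi.
Proof.
  unfold M. rewrite <- !sum_scal, <- plus_sum. apply sum_eq; intros; ring.
Qed.

Lemma bern_nonneg N t k : 0 <= t <= 1 -> 0 <= bern N t k.
Proof.
  intros Ht. unfold bern. apply Rmult_le_pos; [apply Rmult_le_pos|];
  [apply pos_INR | apply pow_le; lra | apply pow_le; lra].
Qed.

Lemma M_mono N t phi psi : 0 <= t <= 1 -> (forall k, (k <= N)%nat -> phi k <= psi k) ->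
  M N t phi <= M N t psi.
Proof.
  intros Ht H. unfold M. apply sum_Rle. intros n Hn.
  apply Rmult_le_compat_l; [apply bern_nonneg; auto | auto].
Qed.

Lemma M_abs N t phi : 0 <= t <= 1 -> Rabs (M N t phi) <= M N t (fun k => Rabs (phi k)).
Proof.
  intros Ht. unfold M. eapply Rle_trans; [apply sum_f_R0_triangle|].
  right. apply sum_eq; intros. rewrite Rabs_mult, (Rabs_pos_eq (bern _ _ _)); auto.
  apply bern_nonneg; auto.
Qed.

Lemma sum_binom N : sum_f_R0 (fun k => INR (binom N k)) N = 2 ^ N.
Proof.
  pose proof (M_one N (1/2)) as H. unfold M, bern in H.
  rewrite (sum_eq _ (fun k => (1/2)^N * INR (binom N k))) in H.
  - rewrite sum_scal in H.
    assert (E : (1/2)^N * 2^N = 1) by (rewrite <- Rpow_mult_distr; replace (1/2*2) with 1 by field; apply pow1).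
    assert (P : 0 < 2^N) by (apply pow_lt; lra).
    apply Rmult_eq_reg_l with ((1/2)^N); [lra|]. intro Z. rewrite Z in E. lra.
  - intros i Hi. replace (1 - 1/2) with (1/2) by field.
    rewrite Rmult_1_r, Rmult_assoc, <- pow_add. replace (i + (N - i))%nat with N by lia. ring.
Qed.
Definition PB d (p : R -> R) B := exists c : nat -> R,
  (forall j, (d < j)%nat -> c j = 0) /\
  (forall t, p t = sum_f_R0 (fun j => c j * t ^ j) d) /\
  sum_f_R0 (fun j => Rabs (c j)) d <= B.



Lemma PB_ext d p q B : (forall t, p t = q t) -> PB d p B -> PB d q B.
Proof. intros E (c & H1 & H2 & H3). exists c; repeat split; auto. intros t; rewrite <- E; auto. Qed.

Lemma PB_mono d p B B' : B <= B' -> PB d p B -> PB d p B'.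
Proof. intros E (c & H1 & H2 & H3). exists c; repeat split; auto. lra. Qed.

Lemma PB_raise d p B : PB d p B -> PB (S d) p B.
Proof.
  intros (c & H1 & H2 & H3). exists c; repeat split.
  - intros; apply H1; lia.
  - intros t; simpl; rewrite H1 by lia; rewrite <- H2; ring.
  - simpl. rewrite H1 by lia. rewrite Rabs_R0; lra.
Qed.

Lemma PB_raise_le d d' p B : (d <= d')%nat -> PB d p B -> PB d' p B.
Proof.
  intros H; induction H; auto. intros; apply PB_raise; auto.
Qed.

Lemma PB_const a : PB 0 (fun _ => a) (Rabs a).
Proof.
  exists (fun j => match j with O => a | _ => 0 end); repeat split.
  - intros [|j] H; [lia|auto].
  - intros; simpl; ring.
  - simpl; lra.
Qed.

Lemma PB_shift d p B : PB d p B -> PB (S d) (fun t => t * p t) B.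
Proof.
  intros (c & H1 & H2 & H3).
  exists (fun j => match j with O => 0 | S j' => c j' end); repeat split.
  - intros [|j] H; [lia| apply H1; lia].
  - intros t. rewrite decomp_sum by lia. simpl Nat.pred. rewrite H2, <- sum_scal.
    simpl. rewrite Rmult_0_l, Rplus_0_l. apply sum_eq; intros; ring.
  - rewrite decomp_sum by lia. simpl Nat.pred. rewrite Rabs_R0, Rplus_0_l. auto.
Qed.

Lemma PB_add d p q B1 B2 : PB d p B1 -> PB d q B2 -> PB d (fun t => p t + q t) (B1 + B2).
Proof.
  intros (c & H1 & H2 & H3) (e & G1 & G2 & G3).
  exists (fun j => c j + e j); repeat split.
  - intros; rewrite H1, G1 by auto; ring.
  - intros t. rewrite H2, G2, <- plus_sum. apply sum_eq; intros; ring.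
  - eapply Rle_trans; [apply sum_Rle with (Bn := fun j => Rabs (c j) + Rabs (e j)); intros; apply Rabs_triang|].
    rewrite plus_sum; lra.
Qed.

Lemma PB_scal d p B a : PB d p B -> PB d (fun t => a * p t) (Rabs a * B).
Proof.
  intros (c & H1 & H2 & H3).
  exists (fun j => a * c j); repeat split.
  - intros; rewrite H1 by auto; ring.
  - intros t. rewrite H2, <- sum_scal. apply sum_eq; intros; ring.
  - rewrite (sum_eq _ (fun j => Rabs a * Rabs (c j))) by (intros; apply Rabs_mult).
    rewrite sum_scal. apply Rmult_le_compat_l; auto. apply Rabs_pos.
Qed.

Lemma PB_sum d n (p : nat -> R -> R) (B : nat -> R) :
  (forall k, (k <= n)%nat -> PB d (p k) (B k)) ->
  PB d (fun t => sum_f_R0 (fun k => p k t) n) (sum_f_R0 B n).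
Proof.
  induction n; intros H.
  - simpl. apply PB_ext with (p 0%nat); auto.
  - simpl. apply PB_add; auto.
Qed.

Lemma sum_term f d j : (forall i, 0 <= f i) -> (j <= d)%nat -> f j <= sum_f_R0 f d.
Proof.
  intros P; induction d; intros H.
  - assert (j = 0%nat) by lia; subst; simpl; lra.
  - destruct (Nat.eq_dec j (S d)) as [->|]; simpl.
    + assert (0 <= sum_f_R0 f d) by (apply cond_pos_sum; auto). lra.
    + specialize (IHd ltac:(lia)). specialize (P (S d)). lra.
Qed.

Lemma PB_coef d p B : PB d p B -> exists c : nat -> R,
  (forall t, p t = sum_f_R0 (fun j => c j * t ^ j) d) /\ forall j, Rabs (c j) <= B.
Proof.
  intros (c & H1 & H2 & H3). exists c; split; auto.
  assert (Hs : forall j, (j <= d)%nat -> Rabs (c j) <= B).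
  { intros j Hj. eapply Rle_trans; [|apply H3]. apply (sum_term (fun j => Rabs (c j))); auto.
    intros; apply Rabs_pos. }
  intros j. destruct (Nat.le_gt_cases j d); auto.
  rewrite H1 by auto. rewrite Rabs_R0. specialize (Hs 0%nat ltac:(lia)).
  pose proof (Rabs_pos (c 0%nat)); lra.
Qed.

Lemma PB_pow k : PB k (fun t => t ^ k) 1.
Proof.
  induction k.
  - apply PB_ext with (fun _ => 1); [intros; simpl; auto|].
    apply PB_mono with (Rabs 1); [rewrite Rabs_R1; lra| apply PB_const].
  - apply PB_ext with (fun t => t * t ^ k); [intros; simpl; auto|]. apply PB_shift; auto.
Qed.

Lemma PB_1mt d p B : PB d p B -> PB (S d) (fun t => (1 - t) * p t) (2 * B).
Proof.
  intros H.
  apply PB_ext with (fun t => p t + (-1) * (t * p t)); [intros; ring|].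
  apply PB_mono with (B + Rabs (-1) * B); [replace (Rabs (-1)) with 1 by (rewrite Rabs_left; lra); lra|].
  apply PB_add; [apply PB_raise; auto| apply PB_scal, PB_shift; auto].
Qed.

Lemma PB_basis k m : PB (k + m) (fun t => t ^ k * (1 - t) ^ m) (2 ^ m).
Proof.
  induction m.
  - rewrite Nat.add_0_r. apply PB_ext with (fun t => t ^ k); [intros; simpl; ring|].
    simpl. apply PB_pow.
  - rewrite Nat.add_succ_r. apply PB_ext with (fun t => (1 - t) * (t ^ k * (1 - t) ^ m));
    [intros; simpl; ring|]. simpl (2 ^ S m). apply PB_1mt; auto.
Qed.


Lemma Rdiv_le_0_compat a b : 0 <= a -> 0 < b -> 0 <= a / b.
Proof. intros; unfold Rdiv; apply Rmult_le_pos; [auto| left; apply Rinv_0_lt_compat; auto]. Qed.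

Lemma key s z eps : 0 <= s -> 0 < z -> 0 < eps ->
  Rabs (s - z) <= 1 / (2 * eps * z ^ 2) * (s ^ 2 - z ^ 2) ^ 2 + eps / 2 * 1.
Proof.
  intros Hs Hz He.
  assert (A : (s - z) ^ 2 * z ^ 2 <= (s ^ 2 - z ^ 2) ^ 2).
  { replace ((s ^ 2 - z ^ 2) ^ 2) with ((s - z) ^ 2 * (s + z) ^ 2) by ring.
    apply Rmult_le_compat_l; [apply pow2_ge_0| nra]. }
  assert (B : (s - z) ^ 2 / (2 * eps) <= 1 / (2 * eps * z ^ 2) * (s ^ 2 - z ^ 2) ^ 2).
  { replace ((s - z) ^ 2 / (2 * eps)) with (1 / (2 * eps * z ^ 2) * ((s - z) ^ 2 * z ^ 2))
      by (field; lra).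
    apply Rmult_le_compat_l; auto.
    assert (0 < 2 * eps * z ^ 2) by (apply Rmult_lt_0_compat; [lra| apply pow_lt; lra]).
    left; apply Rdiv_lt_0_compat; lra. }
  assert (C : Rabs (s - z) <= (s - z) ^ 2 / (2 * eps) + eps / 2).
  { assert (D : Rabs (s - z) ^ 2 = (s - z) ^ 2) by apply pow2_abs.
    assert (E : (s - z) ^ 2 / (2 * eps) + eps / 2 - Rabs (s - z) = (Rabs (s - z) - eps) ^ 2 / (2 * eps))
      by (rewrite <- D; field; lra).
    assert (0 <= (Rabs (s - z) - eps) ^ 2 / (2 * eps)).
    { apply Rdiv_le_0_compat; [apply pow2_ge_0| lra]. }
    lra. }
  lra.
Qed.

Definition shiftc (c : nat -> R) a := fun k => match k with O => c O + a | S k' => c (S k') end.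

Lemma evenE c a z N :
  even_poly_eval (shiftc c a) N z = a + sum_f_R0 (fun k => c k * (z ^ 2) ^ k) N.
Proof.
  unfold even_poly_eval. induction N.
  - simpl. ring.
  - cbn [sum_f_R0]. rewrite IHN. unfold shiftc. rewrite pow_mult. ring.
Qed.

Theorem lemma4 (f : R -> R) (eps : R) (N : nat) :
  lipschitz1_on01 f -> 0 < eps -> is_ceil (4 / eps ^ 3) N ->
  exists c : nat -> R,
    (forall z, 0 <= z <= 1 -> Rabs (even_poly_eval c N z - f z) <= eps) /\
    (forall k, (1 <= k <= N)%nat -> Rabs (c k) <= 2 ^ (2 * N)).
Proof.
  intros Hf He [HN1 HN2].
  assert (He3 : 0 < eps ^ 3) by (apply pow_lt; lra).
  assert (H4 : 4 <= eps ^ 3 * INR N).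
  { replace 4 with (eps ^ 3 * (4 / eps ^ 3)) by (field; lra).
    apply Rmult_le_compat_l; lra. }
  assert (HNp : (0 < N)%nat).
  { destruct N; [simpl in H4; lra| lia]. }
  assert (HNr : 1 <= INR N) by (apply (le_INR 1); lia).
  assert (Heps : 1 <= eps ^ 2 * INR N).
  { destruct (Rle_lt_dec eps 1).
    - assert (eps ^ 3 <= eps ^ 2) by (simpl; nra). nra.
    - assert (1 <= eps ^ 2) by (simpl; nra). nra. }
  set (s := fun k => sqrt (INR k / INR N)).
  set (h := fun k => f (s k) - f 0).
  assert (Hs : forall k, (k <= N)%nat -> 0 <= s k <= 1).
  { intros k Hk. unfold s. split; [apply sqrt_pos|].
    rewrite <- sqrt_1. apply sqrt_le_1_alt.
    apply (Rmult_le_reg_r (INR N)); [lra|]. unfold Rdiv. rewrite Rmult_assoc, Rinv_l by lra.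
    rewrite Rmult_1_r, Rmult_1_l. apply le_INR; auto. }
  assert (Hh : forall k, (k <= N)%nat -> Rabs (h k) <= 1).
  { intros k Hk. unfold h. specialize (Hs k Hk).
    eapply Rle_trans; [apply Hf; lra|]. rewrite Rminus_0_r, Rabs_pos_eq; lra. }
  assert (HP : PB N (fun t => M N t h) (2 ^ N * 2 ^ N)).
  { apply PB_ext with (fun t => sum_f_R0 (fun k => (INR (binom N k) * h k) * (t ^ k * (1 - t) ^ (N - k))) N).
    { intros t. unfold M, bern. apply sum_eq; intros; ring. }
    apply PB_mono with (sum_f_R0 (fun k => Rabs (INR (binom N k) * h k) * 2 ^ (N - k)) N).
    - apply Rle_trans with (sum_f_R0 (fun k => 2 ^ N * INR (binom N k)) N);
      [| rewrite sum_scal, sum_binom; lra].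
      apply sum_Rle. intros k Hk.
      rewrite Rabs_mult, (Rabs_pos_eq (INR _)) by apply pos_INR.
      assert (2 ^ (N - k) <= 2 ^ N) by (apply Rle_pow; [lra|lia]).
      assert (0 <= 2 ^ (N - k)) by (apply pow_le; lra).
      specialize (Hh k Hk). pose proof (pos_INR (binom N k)). pose proof (Rabs_pos (h k)).
      replace (2 ^ N * INR (binom N k)) with (INR (binom N k) * 1 * 2 ^ N) by ring.
      apply Rmult_le_compat; auto.
      + apply Rmult_le_pos; auto.
      + apply Rmult_le_compat_l; auto.
    - apply PB_sum. intros k Hk. apply PB_scal.
      pose proof (PB_basis k (N - k)) as Hb.
      assert (E : (k + (N - k))%nat = N) by lia. rewrite E in Hb. exact Hb. }
  destruct (PB_coef _ _ _ HP) as (c & Hc & Hcb).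
  exists (shiftc c (f 0)). split.
  - intros z Hz. rewrite evenE, <- Hc.
    set (t := z ^ 2).
    assert (Ht : 0 <= t <= 1) by (unfold t; simpl; nra).
    assert (E : f 0 + M N t h - f z = M N t (fun k => f (s k) - f z)).
    { transitivity (M N t (fun k => 1 * h k + (f 0 - f z) * 1)).
      - rewrite M_lin, M_one; ring.
      - apply M_ext; intros; unfold h; ring. }
    rewrite E. eapply Rle_trans; [apply M_abs; auto|].
    destruct (Req_dec z 0) as [Z|Z].
    + assert (M N t (fun k => Rabs (f (s k) - f z)) = 0).
      { unfold M. rewrite (sum_eq _ (fun _ => 0)). { rewrite sum_cte; ring. }
        intros [|k] Hk.
        - unfold s. rewrite Z. simpl INR. unfold Rdiv. rewrite Rmult_0_l, sqrt_0, Rminus_diag, Rabs_R0. ring.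
        - unfold bern, t. rewrite Z. simpl. ring. }
      lra.
    + assert (Hz0 : 0 < z) by lra.
      eapply Rle_trans.
      { apply M_mono with (psi := fun k => 1 / (2 * eps * z ^ 2) * (INR k / INR N - t) ^ 2 + eps / 2 * 1); auto.
        intros k Hk. specialize (Hs k Hk).
        eapply Rle_trans; [apply Hf; lra|].
        replace (INR k / INR N) with (s k ^ 2).
        - apply key; lra.
        - unfold s. simpl. rewrite Rmult_1_r, sqrt_sqrt; auto.
          apply Rdiv_le_0_compat; [apply pos_INR| lra]. }
      rewrite M_lin, M_var, M_one by auto.
      assert (Htp : 0 < t) by (unfold t; apply pow_lt; lra).

      replace (1 / (2 * eps * z ^ 2) * (t * (1 - t) / INR N)) with ((1 - t) / (2 * eps * INR N))
        by (unfold t; field; lra).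
      assert (P : 0 < 2 * eps * INR N) by nra.
      assert ((1 - t) / (2 * eps * INR N) <= eps / 2).
      { apply (Rmult_le_reg_r (2 * eps * INR N)); auto.
        replace ((1 - t) / (2 * eps * INR N) * (2 * eps * INR N)) with (1 - t) by (field; lra).
        replace (eps / 2 * (2 * eps * INR N)) with (eps ^ 2 * INR N) by (field; lra). lra. }
      lra.
  - intros [|k] Hk; [lia|]. unfold shiftc.
    replace (2 * N)%nat with (N + N)%nat by lia. rewrite pow_add. apply Hcb.
Qed.
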